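(* Let $s\ge 1$, $q=4^{2s}$, and let $\theta$ be the automorphism of $F_q$ given by $\theta(a)=a^{4^s}$. Let $n$ be an even positive integer and let $g(x)\in F_q[x;\theta]$ be a right divisor of $x^n-1$ in $F_q[x;\theta]$ whose degree $m$ is even. Then the skew cyclic code $C=\langle g(x)\rangle$ of length $n$ over $F_q$ is a reversible DNA code if and only if $g(x)$ is a palindromic polynomial.
   Context: $F_q[x;\theta]$ is the skew polynomial ring: polynomials $\sum a_ix^i$ with $a_i\in F_q$, usual addition, and multiplication determined by $xa=\theta(a)x$ for $a\in F_q$. A skew cyclic code of length $n$ is a linear code $C\subseteq F_q^n$ such that $(\theta(c_{n-1}),\theta(c_0),\ldots,\theta(c_{n-2}))\in C$ whenever $(c_0,\ldots,c_{n-1})\in C$; identifying $(c_0,\ldots,c_{n-1})$ with $c_0+c_1x+\dots+c_{n-1}x^{n-1}$, such codes are the left $F_q[x;\theta]$-submodules of $F_q[x;\theta]/(x^n-1)$, and $\langle g(x)\rangle$ denotes the left submodule generated by $g(x)$ (the generator need not be monic). A polynomial $f(x)=a_0+a_1x+\dots+a_tx^t$ of degree $t$ is palindromic if $a_i=a_{t-i}$ for all $i$, and $\theta$-palindromic if $a_i=\theta(a_{t-i})$ for all $i$. DNA correspondence: there is a fixed bijection $\tau:F_{4^{2s}}\to\{A,T,G,C\}^{2s}$ such that for every $\beta$, $\tau(\beta^{4^s})$ is the reverse of the string $\tau(\beta)$; it extends to $\phi:F_q^n\to\{A,T,G,C\}^{2sn}$ by concatenation, $\phi(c_0,\ldots,c_{n-1})=(\tau(c_0),\ldots,\tau(c_{n-1}))$.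 A code $C\subseteq F_q^n$ is a reversible DNA code if the reverse string $\phi(c)^r$ lies in $\phi(C)$ for all $c\in C$; equivalently, $(\theta(c_{n-1}),\ldots,\theta(c_1),\theta(c_0))\in C$ for every $(c_0,\ldots,c_{n-1})\in C$. *)

(* Defs.v *)
From HB Require Import structures.
From mathcomp Require Import all_boot all_order all_algebra all_field.
Set Implicit Arguments. Unset Strict Implicit. Unset Printing Implicit Defensive.
Import GRing.Theory.
Local Open Scope ring_scope.

(* Skew polynomials F[x;theta] are represented by ordinary coefficient
   polynomials {poly F}; addition is the usual one and multiplication is
   the skew product determined by x a = theta(a) x, i.e.
   (sum a_i x^i)(sum b_j x^j) = sum a_i theta^i(b_j) x^(i+j). *)
Definition skew_mul (F : fieldType) (theta : F -> F) (p q : {poly F}) : {poly F} :=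
  \sum_(i < size p) \sum_(j < size q)
     (p`_i * iter i theta q`_j) *: 'X^(i + j).

Definition skew_rdvd (F : fieldType) (theta : F -> F) (g f : {poly F}) : Prop :=
  exists h : {poly F}, f = skew_mul theta h g.

Definition poly_of_word (F : fieldType) n (c : n.-tuple F) : {poly F} :=
  \poly_(i < n) nth 0 c i.

(* Membership in the left submodule <g> of F[x;theta]/(x^n - 1), i.e. the
   image of the left ideal F[x;theta] g + F[x;theta] (x^n - 1). *)
Definition skew_code (F : fieldType) (theta : F -> F) (n : nat) (g : {poly F})
  (c : n.-tuple F) : Prop :=
  exists f h : {poly F},
    poly_of_word c = skew_mul theta f g + skew_mul theta h ('X^n - 1).

Inductive DNA := DA | DT | DG | DC.

Definition phi (F : fieldType) (k : nat) (tau : F -> k.-tuple DNA) n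
  (c : n.-tuple F) : seq DNA :=
  flatten (map (fun b => tval (tau b)) (tval c)).

Definition reversible_DNA (F : fieldType) (k : nat) (tau : F -> k.-tuple DNA)
  n (C : n.-tuple F -> Prop) : Prop :=
  forall c, C c -> exists c', C c' /\ phi tau c' = rev (phi tau c).

Definition palindromic (F : fieldType) (f : {poly F}) : Prop :=
  forall i, (i <= (size f).-1)%N -> f`_i = f`_((size f).-1 - i).

Arguments skew_code {F} theta n g c.

(* Main.v *)
Require Import Defs.
From HB Require Import structures.
From mathcomp Require Import all_boot all_order all_algebra all_field.
From mathcomp Require Import zify.
Set Implicit Arguments. Unset Strict Implicit. Unset Printing Implicit Defensive.
Import GRing.Theory.
Local Open Scope ring_scope.

Section Skew.
Variable F : fieldType.
Variable th : {rmorphism F -> F}.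
Hypothesis thK : involutive th.

Definition ti i (x : F) := if odd i then th x else x.
Definition tw i (q : {poly F}) := if odd i then map_poly th q else q.
Definition sm (p q : {poly F}) :=
  \sum_(i < size p) (p`_i *: 'X^i) * tw i q.

Lemma ti0 i : ti i 0 = 0.
Proof. by rewrite /ti; case: odd; rewrite ?rmorph0. Qed.
Lemma tiD i x y : ti i (x + y) = ti i x + ti i y.
Proof. by rewrite /ti; case: odd; rewrite ?rmorphD. Qed.
Lemma tiM i x y : ti i (x * y) = ti i x * ti i y.
Proof. by rewrite /ti; case: odd; rewrite ?rmorphM. Qed.
Lemma ti_th i x : th (ti i x) = ti i.+1 x.
Proof. by rewrite /ti /=; case: odd => //=; rewrite thK. Qed.
Lemma tiK i j x : ti i (ti j x) = ti (i + j) x.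
Proof. by rewrite /ti oddD; case: odd; case: odd => //=; rewrite thK. Qed.
Lemma ti_eq0 i x : (ti i x == 0) = (x == 0).
Proof. by rewrite /ti; case: odd; rewrite ?fmorph_eq0. Qed.

Lemma coef_tw i q k : (tw i q)`_k = ti i q`_k.
Proof. by rewrite /tw /ti; case: odd; rewrite ?coef_map. Qed.
Lemma twD i p q : tw i (p + q) = tw i p + tw i q.
Proof. by rewrite /tw; case: odd; rewrite ?rmorphD. Qed.
Lemma tw0 i : tw i 0 = 0.
Proof. by rewrite /tw; case: odd; rewrite ?rmorph0. Qed.
Lemma twM i p q : tw i (p * q) = tw i p * tw i q.
Proof. by rewrite /tw; case: odd; rewrite ?rmorphM. Qed.
Lemma twZ i c p : tw i (c *: p) = ti i c *: tw i p.
Proof. by rewrite /tw /ti; case: odd; rewrite ?map_polyZ. Qed.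
Lemma twXn i j : tw i 'X^j = 'X^j.
Proof. by rewrite /tw; case: odd; rewrite ?map_polyXn. Qed.
Lemma twK i j (q : {poly F}) : tw i (tw j q) = tw (i + j) q.
Proof.
apply/polyP=> k; rewrite !coef_tw tiK //.
Qed.
Lemma size_tw i (q : {poly F}) : size (tw i q) = size q.
Proof. by rewrite /tw; case: odd; rewrite ?size_map_poly. Qed.
Lemma tw_sum i n (G : 'I_n -> {poly F}) :
  tw i (\sum_(j < n) G j) = \sum_(j < n) tw i (G j).
Proof. exact: (big_morph _ (twD i) (tw0 i)). Qed.

Lemma polyE (p : {poly F}) : p = \sum_(i < size p) p`_i *: 'X^i.
Proof. by rewrite -poly_def coefK. Qed.

Lemma monoM a b i j :
  (a *: 'X^i) * (b *: 'X^j) = (a * b) *: 'X^(i + j) :> {poly F}.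
Proof. by rewrite -scalerAl -scalerAr scalerA exprD. Qed.

Lemma smE N (p q : {poly F}) : (size p <= N)%N ->
  sm p q = \sum_(i < N) (p`_i *: 'X^i) * tw i q.
Proof.
move=> hN; rewrite /sm (big_ord_widen N (fun i => (p`_i *: 'X^i) * tw i q)) //.
rewrite big_mkcond /=; apply: eq_bigr => i _; case: ifP => // /negbT.
by rewrite -leqNgt => hi; rewrite nth_default // scale0r mul0r.
Qed.

Lemma sm0l (q : {poly F}) : sm 0 q = 0.
Proof. by rewrite /sm size_poly0 big_ord0. Qed.
Lemma sm0r (p : {poly F}) : sm p 0 = 0.
Proof. by rewrite /sm big1 // => i _; rewrite tw0 mulr0. Qed.
Lemma smDl (p1 p2 q : {poly F}) : sm (p1 + p2) q = sm p1 q + sm p2 q.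
Proof.
pose N := maxn (size p1) (size p2).
rewrite (@smE N) ?(leq_trans (size_add _ _)) // (@smE N p1) ?leq_maxl //.
rewrite (@smE N p2) ?leq_maxr // -big_split /=; apply: eq_bigr => i _.
by rewrite coefD scalerDl mulrDl.
Qed.
Lemma smDr (p q1 q2 : {poly F}) : sm p (q1 + q2) = sm p q1 + sm p q2.
Proof.
by rewrite /sm -big_split /=; apply: eq_bigr => i _; rewrite twD mulrDr.
Qed.
Lemma sm_suml n (G : 'I_n -> {poly F}) q :
  sm (\sum_(i < n) G i) q = \sum_(i < n) sm (G i) q.
Proof. exact: (big_morph (fun p => sm p q) (fun a b => smDl a b q) (sm0l q)). Qed.
Lemma sm_sumr n (G : 'I_n -> {poly F}) p :
  sm p (\sum_(i < n) G i) = \sum_(i < n) sm p (G i).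
Proof. exact: (big_morph (fun q => sm p q) (fun a b => smDr p a b) (sm0r p)). Qed.

Lemma sm_mono (a : F) i (q : {poly F}) : sm (a *: 'X^i) q = (a *: 'X^i) * tw i q.
Proof.
rewrite (@smE i.+1) ?(leq_trans (size_scale_leq _ _)) ?size_polyXn //.
rewrite big_ord_recr /= big1 ?add0r ?coefZ ?coefXn ?eqxx ?mulr1 //.
by move=> j _; rewrite coefZ coefXn (ltn_eqF (ltn_ord j)) mulr0 scale0r mul0r.
Qed.

Lemma sm_expand (p q : {poly F}) :
  sm p q = \sum_(i < size p) sm (p`_i *: 'X^i) q.
Proof. by rewrite {1}(polyE p) sm_suml. Qed.

Lemma smA (p q r : {poly F}) : sm (sm p q) r = sm p (sm q r).
Proof.
rewrite (sm_expand p q) sm_suml (sm_expand p (sm q r)).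
apply: eq_bigr => i _.
rewrite sm_mono sm_mono (sm_expand q r) tw_sum mulr_sumr.
rewrite [in LHS](polyE q) tw_sum mulr_sumr sm_suml; apply: eq_bigr => j _.
rewrite twZ twXn monoM sm_mono sm_mono twM twZ twXn twK mulrA monoM.
by [].
Qed.

Lemma coef_mono a i (q : {poly F}) k :
  ((a *: 'X^i) * tw i q)`_k = if (k < i)%N then 0 else a * ti i q`_(k - i).
Proof. by rewrite -scalerAl coefZ coefXnM; case: ifP; rewrite ?mulr0 ?coef_tw. Qed.

Lemma coef_gt_size (p : {poly F}) k : p`_k != 0 -> (k < size p)%N.
Proof. by apply: contraR; rewrite -leqNgt => h; rewrite nth_default. Qed.

Lemma size_sm (p q : {poly F}) : p != 0 -> q != 0 ->
  ((size p).-1 + (size q).-1 < size (sm p q))%N.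
Proof.
move=> p0 q0; apply: coef_gt_size.
rewrite /sm coef_sum (polySpred p0) big_ord_recr /= big1 ?add0r.
  rewrite coef_mono ltnNge leq_addr /= addKn mulf_neq0 //.
    by rewrite -lead_coefE lead_coef_eq0.
  by rewrite ti_eq0 -lead_coefE lead_coef_eq0.
move=> j _; rewrite coef_mono; case: ifP => // _.
rewrite [q`__]nth_default ?ti0 ?mulr0 //.
have := ltn_ord j; rewrite (polySpred q0); lia.
Qed.

Definition Rv n (p : {poly F}) : {poly F} := \poly_(l < n) th p`_(n.-1 - l).
Definition gr (g : {poly F}) : {poly F} := \poly_(j < size g) g`_((size g).-1 - j).

Lemma RvD n p q : Rv n (p + q) = Rv n p + Rv n q.
Proof.
by apply/polyP => l; rewrite coefD !coef_poly; case: ifP; rewrite ?addr0 // coefD rmorphD.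
Qed.
Lemma Rv0 n : Rv n 0 = 0.
Proof. by apply/polyP => l; rewrite coef_poly !coef0 rmorph0; case: ifP. Qed.
Lemma Rv_sum n k (G : 'I_k -> {poly F}) :
  Rv n (\sum_(j < k) G j) = \sum_(j < k) Rv n (G j).
Proof. exact: (big_morph _ (RvD n) (Rv0 n)). Qed.

Lemma ti_odd i j x : odd i = odd j -> ti i x = ti j x.
Proof. by rewrite /ti => ->. Qed.

Lemma Rv_mono n (g : {poly F}) m b i :
  size g = m.+1 -> ~~ odd n -> ~~ odd m -> (i + m < n)%N ->
  Rv n ((b *: 'X^i) * tw i g) =
  (th b *: 'X^(n - m - 1 - i)) * tw (n - m - 1 - i) (gr g).
Proof.
move=> sg en em lt; apply/polyP => l.
rewrite coef_mono coef_poly coef_poly sg /= -subn1.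
have gz j : (m < j)%N -> g`_j = 0.
  by move=> h; rewrite nth_default // sg.
case: (ltnP l n) => ln.
  rewrite coef_mono.
  case: (ltnP (n - 1 - l) i) => h1.
    rewrite rmorph0; case: ifP => // h2.
    by case: ifP => h3; [exfalso; lia | rewrite ti0 mulr0].
  rewrite rmorphM ti_th.
  case: ifP => h2.
    by rewrite gz ?ti0 ?mulr0 ?rmorph0 //; lia.
  case: ifP => h3.
    rewrite (@ti_odd i.+1 (n - m - 1 - i)); last first.
      move/negbTE: em; move/negbTE: en => en em.
      have e : (n = (n - m - 1 - i) + i.+1 + m)%N by lia.
      by move: en; rewrite {1}e !oddD em /= addbF => /eqP; case: odd; case: odd.
    congr (_ * ti _ _); congr (g`_ _); lia.
  by rewrite gz ?ti0 ?mulr0 ?rmorph0 //; lia.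
case: ifP => // h2; case: ifP => h3; [lia | by rewrite ti0 mulr0].
Qed.

Lemma sm_C c (q : {poly F}) : sm c%:P q = c *: q.
Proof.
rewrite (_ : c%:P = c *: 'X^0) ?sm_mono; last by rewrite expr0 alg_polyC.
by rewrite expr0 /tw /= -scalerAl mul1r.
Qed.

Section Main.
Variables (n : nat) (g k : {poly F}).
Hypothesis hk : 'X^n - 1 = sm k g.
Hypothesis n0 : (0 < n)%N.
Hypothesis en : ~~ odd n.
Hypothesis em : ~~ odd (size g).-1.
Hypothesis ch : (1 + 1 : F) = 0.

Lemma m1 : (-1 : F) = 1.
Proof. by apply/eqP; rewrite eq_sym -addr_eq0 ch. Qed.

Definition Cd (c : n.-tuple F) :=
  exists f h, poly_of_word c = sm f g + sm h ('X^n - 1).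

Lemma Cd_iff c : Cd c <-> exists a, poly_of_word c = sm a g.
Proof.
split=> [[f [h e]] | [a e]]; last by exists a, 0; rewrite e sm0l addr0.
by exists (f + sm h k); rewrite e hk -smA smDl.
Qed.

Lemma XnB1_neq0 : ('X^n - 1 : {poly F}) != 0.
Proof. by rewrite -size_poly_eq0 -polyC1 size_XnsubC. Qed.

Lemma g_neq0 : g != 0.
Proof. by apply: contraNneq XnB1_neq0 => g0; rewrite hk g0 sm0r. Qed.

Lemma k_neq0 : k != 0.
Proof. by apply: contraNneq XnB1_neq0 => k0; rewrite hk k0 sm0l. Qed.

Lemma g0_neq0 : g`_0 != 0.
Proof.
apply/negP => /eqP g00.
have : ('X^n - 1 : {poly F})`_0 = 0.
  rewrite hk /sm coef_sum big1 // => i _; rewrite coef_mono; case: ifP => // _.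
  by rewrite sub0n g00 ti0 mulr0.
rewrite coefB coefXn coef1 eqxx eq_sym (gtn_eqF n0) sub0r => /eqP.
by rewrite oppr_eq0 oner_eq0.
Qed.

Lemma m_le_n : ((size g).-1 <= n)%N.
Proof.
have := size_sm k_neq0 g_neq0; rewrite -hk -polyC1 size_XnsubC //.
rewrite -!subn1; lia.
Qed.

Lemma gr_pal : palindromic g -> gr g = g.
Proof.
move=> pg; apply/polyP => l; rewrite coef_poly; case: ifP => hl.
  rewrite [RHS]pg //; move: hl; rewrite -subn1; lia.
by rewrite nth_default // leqNgt hl.
Qed.

Lemma word_poly (P : {poly F}) : (size P <= n)%N ->
  exists c : n.-tuple F, poly_of_word c = P.
Proof.
move=> sP; exists [tuple P`_i | i < n]; apply/polyP => l.
rewrite coef_poly; case: ifP => hl.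
  by have := @nth_mktuple _ _ (fun i : 'I_n => P`_i) 0 (Ordinal hl); move=> /= ->.
by rewrite nth_default //; apply: leq_trans sP _; rewrite leqNgt hl.
Qed.

Definition Rw (c : n.-tuple F) : n.-tuple F :=
  [tuple th (tnth c (rev_ord i)) | i < n].

Lemma Rw_poly c : poly_of_word (Rw c) = Rv n (poly_of_word c).
Proof.
apply/polyP => l; rewrite !coef_poly; case: ifP => // hl.
have := @nth_mktuple _ _ (fun i : 'I_n => th (tnth c (rev_ord i))) 0 (Ordinal hl).
move=> /= ->; rewrite (tnth_nth 0) /=.
have -> : (n.-1 - l < n)%N by rewrite -subn1; lia.
by congr (th (nth 0 c _)); rewrite -subn1; lia.
Qed.

Lemma pal_closed : palindromic g -> forall c, Cd c -> Cd (Rw c).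
Proof.
move=> pg c /Cd_iff [a ha]; apply/Cd_iff; rewrite Rw_poly ha.
have [->|a0] := eqVneq a 0; first by exists 0; rewrite sm0l Rv0.
have hs : ((size a).-1 + (size g).-1 < n)%N.
  have := size_sm a0 g_neq0; rewrite -ha => h; exact: (leq_trans h (size_poly _ _)).
exists (\sum_(i < size a) (th a`_i *: 'X^(n - (size g).-1 - 1 - i))).
rewrite sm_suml [in LHS]/sm Rv_sum; apply: eq_bigr => i _.
rewrite sm_mono (@Rv_mono n g _ _ _ (polySpred g_neq0)) ?gr_pal //.
by move: hs (ltn_ord i); rewrite -!subn1; lia.
Qed.

Lemma closed_pal : (forall c, Cd c -> Cd (Rw c)) -> palindromic g.
Proof.
move=> cl; rewrite /palindromic.
have sg := polySpred g_neq0; have mln := m_le_n.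
set m := (size g).-1 in sg mln *.
have [mn|mn] : (m = n) \/ (m < n)%N by lia.
  have sk : size k == 1%N.
    have := size_sm k_neq0 g_neq0; rewrite -hk -polyC1 size_XnsubC // -/m mn.
    have := size_poly_gt0 k; rewrite k_neq0 -subn1; lia.
  move/size_poly1P: sk => [c c0 kc].
  have hg : 'X^n - 1 = c *: g by rewrite hk kc sm_C.
  move=> i hi; apply: (mulfI c0).
  rewrite -!coefZ -hg !coefB !coefXn !coef1 mn.
  case: (eqVneq i 0) => [->|i0].
    have -> : (0%N == n) = false by rewrite eq_sym gtn_eqF.
    by rewrite subn0 eqxx gtn_eqF //= sub0r subr0 m1.
  case: (eqVneq i n) => [->|inn].
    rewrite subnn.
    have -> : (0%N == n) = false by rewrite eq_sym gtn_eqF.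
    by rewrite eqxx /= subr0 sub0r m1.
  have -> : ((n - i)%N == n) = false by apply/eqP; rewrite mn in hi; lia.
  have -> : ((n - i)%N == 0%N) = false by apply/eqP; rewrite mn in hi; lia.
  by [].
set i0 := (n - m - 1)%N.
pose P := (1 *: 'X^i0) * tw i0 g.
have sP : (size P <= n)%N.
  have h := size_mul_leq (1 *: 'X^i0) (tw i0 g).
  have h2 := size_scale_leq 1 ('X^i0 : {poly F}).
  move: h h2; rewrite size_tw size_polyXn sg -!subn1 /P /i0 => h h2; apply: (leq_trans h); lia.
have [c0 hc0] := word_poly sP.
have Cc0 : Cd c0 by apply/Cd_iff; exists (1 *: 'X^i0); rewrite hc0 sm_mono.
have := cl _ Cc0 => /Cd_iff [a]; rewrite Rw_poly hc0 /P (@Rv_mono n g _ _ _ sg) //; last first.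
  by rewrite /i0; lia.
rewrite (_ : n - m - 1 - i0 = 0)%N; last by rewrite /i0; lia.
rewrite rmorph1 expr0 scale1r mul1r /tw /= => ha.
have grm : (gr g)`_m = g`_0 by rewrite coef_poly sg ltnSn /= subnn.
have gr0 : gr g != 0 by apply: contraNneq g0_neq0 => e; rewrite -grm e coef0.
have a0 : a != 0 by apply: contraNneq gr0 => e; rewrite ha e sm0l.
have sa : size a == 1%N.
  have := size_sm a0 g_neq0; rewrite -ha -/m => h.
  have := leq_trans h (size_poly _ _); rewrite sg.
  have := size_poly_gt0 a; rewrite a0 -!subn1; lia.
move/size_poly1P: sa => [c c00 ac]; rewrite ac sm_C in ha.
have hj j : (j <= m)%N -> g`_(m - j) = c * g`_j.
  move=> hj; have := congr1 (fun p : {poly F} => p`_j) ha; rewrite coef_poly coefZ sg /=.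
  by have -> : (j < m.+1)%N by lia.
have c1 : c = 1.
  have e1 := hj 0%N (leq0n _); have e2 := hj m (leqnn _).
  rewrite subn0 in e1; rewrite subnn e1 mulrA in e2.
  have : c ^+ 2 == 1.
    rewrite expr2; apply/eqP; apply: (mulIf g0_neq0); by rewrite mul1r -e2.
  by rewrite sqrf_eq1 => /orP [/eqP|/eqP ->] //; rewrite m1.
move=> i hi; by rewrite -[LHS]mul1r -c1 -hj.
Qed.

End Main.

End Skew.

Definition frob (F : fieldType) (s : nat) (H : 2 \in [pchar F]) (x : F) := x ^+ (4 ^ s)%N.

Lemma frob_nat (F : fieldType) (s : nat) (H : 2 \in [pchar F]) : [pchar F].-nat (4 ^ s)%N.
Proof.
by rewrite (_ : 4 = 2 ^ 2)%N // -expnM pnatX (pnatE _ (isT : prime 2)) H.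
Qed.

Lemma frob_nmod (F : fieldType) s (H : 2 \in [pchar F]) : nmod_morphism (@frob F s H).
Proof.
split; rewrite /frob; first by rewrite expr0n expn_eq0.
by move=> x y; exact: exprDn_pchar (frob_nat s H).
Qed.

Lemma frob_monoid (F : fieldType) s (H : 2 \in [pchar F]) : monoid_morphism (@frob F s H).
Proof. by split; rewrite /frob ?expr1n // => x y; rewrite exprMn. Qed.

HB.instance Definition _ (F : fieldType) s (H : 2 \in [pchar F]) :=
  GRing.isNmodMorphism.Build F F (@frob F s H) (@frob_nmod F s H).
HB.instance Definition _ (F : fieldType) s (H : 2 \in [pchar F]) :=
  GRing.isMonoidMorphism.Build F F (@frob F s H) (@frob_monoid F s H).

Lemma skew_sm (F : fieldType) (th : {rmorphism F -> F}) (thK : involutive th)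
  (f : F -> F) (hf : forall x, f x = th x) (p q : {poly F}) :
  skew_mul f p q = sm th p q.
Proof.
have it i x : iter i f x = ti th i x.
  by elim: i => //= i IH; rewrite IH hf (ti_th thK).
rewrite /skew_mul /sm; apply: eq_bigr => i _.
rewrite (polyE (tw th i q)) size_tw mulr_sumr; apply: eq_bigr => j _.
by rewrite coef_tw monoM it.
Qed.

Lemma map_const' (T U : Type) (s : seq T) (x : U) :
  map (fun _ => x) s = nseq (size s) x.
Proof. by elim: s => //= a t ->. Qed.

Lemma phi_inj (F : fieldType) k (tau : F -> k.-tuple DNA) n
  (Htau : injective tau) (c1 c2 : n.-tuple F) :
  phi tau c1 = phi tau c2 -> c1 = c2.
Proof.
rewrite /phi => e.
have sh (c : n.-tuple F) : shape (map (fun b => tval (tau b)) c) = nseq n k.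
  rewrite /shape -map_comp (@eq_map _ _ _ (fun _ => k)); last by move=> b /=; rewrite size_tuple.
  by rewrite map_const' size_tuple.
have := congr1 (reshape (nseq n k)) e; rewrite -{1}(sh c1) -(sh c2) !flattenK.
move/inj_map => h; apply: val_inj; apply: h => x y /val_inj; exact: Htau.
Qed.

Lemma Rw_val (F : fieldType) (th : {rmorphism F -> F}) n (c : n.-tuple F) :
  tval (Rw th c) = rev (map th c).
Proof.
apply: (@eq_from_nth _ 0); first by rewrite size_tuple size_rev size_map size_tuple.
rewrite size_tuple => l hl.
have := @nth_mktuple _ _ (fun i : 'I_n => th (tnth c (rev_ord i))) 0 (Ordinal hl).
move=> /= ->; rewrite (tnth_nth 0) /= nth_rev size_map size_tuple //.
by rewrite (nth_map 0) // size_tuple; lia.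
Qed.

Lemma phi_rev (F : fieldType) (th : {rmorphism F -> F}) k (tau : F -> k.-tuple DNA) n
  (ht : forall b, tval (tau (th b)) = rev (tval (tau b))) (c : n.-tuple F) :
  rev (phi tau c) = phi tau (Rw th c).
Proof.
rewrite /phi rev_flatten Rw_val -map_comp map_rev -map_comp; congr (flatten (rev _)).
by apply: eq_map => b /=; rewrite ht.
Qed.

Unset Implicit Arguments.

Theorem theorem1 (s : nat) (F : finFieldType)
  (tau : F -> (2 * s).-tuple DNA) (n : nat) (g : {poly F}) :
  (1 <= s)%N ->
  #|F| = (4 ^ (2 * s))%N ->
  bijective tau ->
  (forall b : F, tval (tau (b ^+ (4 ^ s))) = rev (tval (tau b))) ->
  (0 < n)%N -> ~~ odd n ->
  skew_rdvd (fun a : F => a ^+ (4 ^ s)) g ('X^n - 1) ->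
  ~~ odd (size g).-1 ->
  (reversible_DNA tau (skew_code (fun a : F => a ^+ (4 ^ s)) n g)
   <-> palindromic g).
Proof.
move=> s1 cardF btau htau n0 en [k hk] em.
have tinj := bij_inj btau.
have ch2 : 2 \in [pchar F].
  apply: (@card_finPcharP _ 2 (4 * s)) => //.
  by rewrite cardF (_ : 4 = 2 ^ 2)%N // -!expnM mulnA.
have ch : (1 + 1 : F) = 0 by rewrite -mulr2n pcharf0.
pose th : {rmorphism F -> F} := frob s ch2.
have thE x : th x = x ^+ (4 ^ s) by [].
have thK : involutive th.
  move=> x; rewrite !thE -exprM -expnD addnn -mul2n.
  by rewrite -cardF expf_card.
have Esk p q : skew_mul (fun a : F => a ^+ (4 ^ s)) p q = sm th p q.
  by apply: skew_sm => // x.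
rewrite Esk in hk.
have Ecode c : skew_code (fun a : F => a ^+ (4 ^ s)) n g c <-> Cd th g c.
  by split=> [[f [h e]]|[f [h e]]]; exists f, h; rewrite ?Esk // -!Esk.
have ht b : tval (tau (th b)) = rev (tval (tau b)) by rewrite thE htau.
split.
  move=> rv; apply: (closed_pal thK hk n0 en em ch) => c Cc.
  have [c' [Cc' e]] := rv c (proj2 (Ecode c) Cc).
  rewrite (phi_rev ht) in e.
  by rewrite -(phi_inj tinj e); apply/Ecode.
move=> pg c Cc; exists (Rw th c); split; last by rewrite (phi_rev ht).
by apply/Ecode; apply: (pal_closed thK hk n0 en em pg); apply/Ecode.
Qed.
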